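(* Let $\mathcal{C}:=\operatorname{conv}(\{\Sigma_e\}_{e\in\mathcal{E}})$ and let $\mathcal{P}$ be the set of all distributions $P$ on $\mathbb{R}^{1\times p}$ with $\mathbb{E}_P[\mathbf{x}]=0$ and finite second moments such that $\mathbb{E}_P[\mathbf{x}^\top\mathbf{x}]\in\mathcal{C}$. Let $\mathcal{L}$ be one of $\mathcal{L}_{\mathrm{RCS}}$, $-\mathcal{L}_{\mathrm{var}}$, $\mathcal{L}_{\mathrm{reg}}$, and let $V_k^*\in\mathcal{O}_{p\times k}$ be a solution of the corresponding problem (maxRCS, minPCA, maxRegret respectively), i.e. $V_k^*\in\arg\min_{V\in\mathcal{O}_{p\times k}}\max_{e\in\mathcal{E}}\mathcal{L}(V;P_e)$. Then: (i) for all $V\in\mathcal{O}_{p\times k}$, $\sup_{P\in\mathcal{P}}\mathcal{L}(V;P)=\max_{e\in\mathcal{E}}\mathcal{L}(V;P_e)$; (ii) for all $V,W\in\mathcal{O}_{p\times k}$, if $\max_e\mathcal{L}(V;P_e)<\max_e\mathcal{L}(W;P_e)$ then $\sup_{P\in\mathcal{P}}\mathcal{L}(V;P)<\sup_{P\in\mathcal{P}}\mathcal{L}(W;P)$; (iii) $V_k^*\in\arg\min_{V\in\mathcal{O}_{p\times k}}\sup_{P\in\mathcal{P}}\mathcal{L}(V;P)$; (iv) the conclusion of (iii) does not hold in general for pooled PCA and separate PCA: there exist $p,k,E$, weights $(w_e)$ and source distributions such that the (unique up to sign) solution $V^{\mathrm{pool}}$ of poolPCA and the solution $V^{\mathrm{sep}}$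 of sepPCA are not in $\arg\min_{V}\sup_{P\in\mathcal{P}}\mathcal{L}(V;P)$.
   Context: Let $p\ge 1$ and $1\le k\le p$ be integers and $\mathcal{O}_{p\times k}:=\{V\in\mathbb{R}^{p\times k}: V^\top V=I_k\}$. Source domains are $\mathcal{E}=\{1,\dots,E\}$; for each $e\in\mathcal{E}$, $P_e$ is a distribution on row vectors $\mathbf{x}\in\mathbb{R}^{1\times p}$ with $\mathbb{E}[\mathbf{x}]=0$ and finite covariance $\Sigma_e:=\mathbb{E}[\mathbf{x}^\top\mathbf{x}]$ with $\operatorname{Tr}(\Sigma_e)>0$; weights $w_e>0$ with $\sum_e w_e=1$. For symmetric positive semidefinite $\Sigma$ and $V\in\mathcal{O}_{p\times k}$: $\mathcal{L}_{\mathrm{var}}(V;\Sigma)=\operatorname{Tr}(V^\top\Sigma V)$, $\mathcal{L}_{\mathrm{RCS}}(V;\Sigma)=\operatorname{Tr}(\Sigma)-\operatorname{Tr}(V^\top\Sigma V)$ ($=\mathbb{E}\|\mathbf{x}-\mathbf{x}VV^\top\|_2^2$), $\mathcal{L}_{\mathrm{reg}}(V;\Sigma)=\mathcal{L}_{\mathrm{RCS}}(V;\Sigma)-\min_{W\in\mathcal{O}_{p\times k}}\mathcal{L}_{\mathrm{RCS}}(W;\Sigma)$; for a distribution $P$ with covariance $\Sigma=\mathbb{E}_P[\mathbf{x}^\top\mathbf{x}]$, $\mathcal{L}(V;P):=\mathcal{L}(V;\Sigma)$. poolPCA: $V^{\mathrm{pool}}\in\arg\max_{V\in\mathcal{O}_{p\times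 k}}\operatorname{Tr}(V^\top\Sigma_{\mathrm{pool}}V)$ with $\Sigma_{\mathrm{pool}}=\sum_e w_e\Sigma_e$. sepPCA: for each $e$ let $V^{*,e}\in\arg\max_V\operatorname{Tr}(V^\top\Sigma_eV)$, let $e_0$ be the smallest index minimizing $\operatorname{Tr}((V^{*,e})^\top\Sigma_eV^{*,e})$, and $V^{\mathrm{sep}}:=V^{*,e_0}$. *)

(* Defs.v *)
From HB Require Import structures.
From mathcomp Require Import all_boot all_order all_algebra.
From mathcomp Require Import all_classical all_reals all_analysis.
Set Implicit Arguments. Unset Strict Implicit. Unset Printing Implicit Defensive.
Import Order.TTheory GRing.Theory Num.Theory.
Local Open Scope classical_set_scope.
Local Open Scope ring_scope.

Section Defs.
Variable R : realType.

Definition orthonormal_mx (p k : nat) (V : 'M[R]_(p, k)) : Prop :=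
  V^T *m V = 1%:M.

Definition Lvar (p k : nat) (V : 'M[R]_(p, k)) (S : 'M[R]_p) : R :=
  \tr (V^T *m S *m V).

Definition LRCS (p k : nat) (V : 'M[R]_(p, k)) (S : 'M[R]_p) : R :=
  \tr S - Lvar V S.

(* L_reg(V;S) = L_RCS(V;S) - min_{W in O} L_RCS(W;S)  (the min exists by
   compactness, so it equals the infimum used here) *)
Definition Lreg (p k : nat) (V : 'M[R]_(p, k)) (S : 'M[R]_p) : R :=
  LRCS V S - inf [set LRCS W S | W in [set W : 'M[R]_(p, k) | orthonormal_mx W]].

Inductive loss_kind := RCS_loss | negVar_loss | Reg_loss.

Definition Lk (kind : loss_kind) (p k : nat) (V : 'M[R]_(p, k)) (S : 'M[R]_p) : R :=
  match kind with
  | RCS_loss => LRCS V S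
  | negVar_loss => - Lvar V S
  | Reg_loss => Lreg V S
  end.

Definition maxdom (E : nat) (f : 'I_E -> R) : R := sup [set f e | e in [set: 'I_E]].

(* A distribution on R^{1 x p}, represented as the law of a random row vector
   X : T -> 'rV_p on a probability space (T, P): measurable coordinates,
   finite second moments, and mean zero. *)
Definition centered_rv (d : measure_display) (T : measurableType d)
  (P : probability T R) (p : nat) (X : T -> 'rV[R]_p) : Prop :=
  (forall i : 'I_p, measurable_fun setT (fun t => X t 0 i)) /\
  (forall i : 'I_p, P.-integrable setT (fun t => ((X t 0 i) ^+ 2)%:E)) /\
  (forall i : 'I_p, (\int[P]_t (X t 0 i)%:E = 0)%E).

Definition cov (d : measure_display) (T : measurableType d)
  (P : probability T R) (p : nat) (X : T -> 'rV[R]_p) : 'M[R]_p :=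
  \matrix_(i, j) fine (\int[P]_t (X t 0 i * X t 0 j)%:E).

Definition in_conv (E p : nat) (Sig : 'I_E -> 'M[R]_p) (S : 'M[R]_p) : Prop :=
  exists lam : 'I_E -> R, (forall e, 0 <= lam e) /\ \sum_(e < E) lam e = 1 /\
    S = \sum_(e < E) lam e *: Sig e.

Definition loss_values (kind : loss_kind) (E p k : nat) (Sig : 'I_E -> 'M[R]_p)
  (V : 'M[R]_(p, k)) : set R :=
  [set r | exists (d : measure_display) (T : measurableType d)
             (P : probability T R) (X : T -> 'rV[R]_p),
             centered_rv P X /\ in_conv Sig (cov P X) /\ r = Lk kind V (cov P X)].

Definition supP (kind : loss_kind) (E p k : nat) (Sig : 'I_E -> 'M[R]_p)
  (V : 'M[R]_(p, k)) : R := sup (loss_values kind Sig V).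

Definition is_sup (A : set R) (s : R) : Prop :=
  ubound A s /\ (forall b, ubound A b -> s <= b).

Definition argmin_orth (p k : nat) (f : 'M[R]_(p, k) -> R) (V : 'M[R]_(p, k)) : Prop :=
  orthonormal_mx V /\ (forall W, orthonormal_mx W -> f V <= f W).

Definition argmax_orth (p k : nat) (f : 'M[R]_(p, k) -> R) (V : 'M[R]_(p, k)) : Prop :=
  orthonormal_mx V /\ (forall W, orthonormal_mx W -> f W <= f V).

Definition is_poolPCA (E p k : nat) (w : 'I_E -> R) (Sig : 'I_E -> 'M[R]_p)
  (V : 'M[R]_(p, k)) : Prop :=
  argmax_orth (fun W => Lvar W (\sum_(e < E) w e *: Sig e)) V.

Definition is_sepPCA (E p k : nat) (Sig : 'I_E -> 'M[R]_p)
  (Vs : 'I_E -> 'M[R]_(p, k)) (V : 'M[R]_(p, k)) : Prop :=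
  (forall e, argmax_orth (fun W => Lvar W (Sig e)) (Vs e)) /\
  exists e0 : 'I_E,
    (forall e, Lvar (Vs e0) (Sig e0) <= Lvar (Vs e) (Sig e)) /\
    (forall e : 'I_E, (e < e0)%N -> Lvar (Vs e0) (Sig e0) < Lvar (Vs e) (Sig e)) /\
    V = Vs e0.

End Defs.

(* Main.v *)
Require Import Defs.
From HB Require Import structures.
From mathcomp Require Import all_boot all_order all_algebra.
From mathcomp Require Import all_classical all_reals all_analysis.
From mathcomp Require Import ring lra.
Import Order.TTheory GRing.Theory Num.Theory.
Local Open Scope classical_set_scope.
Local Open Scope ring_scope.

Lemma sup_eq_mem {R : realType} (A : set R) x : A x -> ubound A x -> sup A = x.
Proof.
move=> Ax ub; apply/eqP; rewrite eq_le ge_sup //; last by exists x.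
by apply: sup_upper_bound => //; split; [exists x | exists x].
Qed.

Lemma inf_eq_mem {R : realType} (A : set R) x : A x -> lbound A x -> inf A = x.
Proof.
move=> Ax lb; apply/eqP; rewrite eq_le lb_le_inf ?andbT //; last by exists x.
by apply: ge_inf => //; exists x.
Qed.

Lemma maxdom_ge {R : realType} E (f : 'I_E -> R) e : f e <= maxdom f.
Proof.
rewrite /maxdom; apply: sup_upper_bound; last by exists e.
split; first by exists (f e), e.
exists (\big[Num.max/f e]_(i < E) f i) => _ [i _ <-].
by rewrite le_bigmax_cond.
Qed.

Lemma maxdom_le {R : realType} E (f : 'I_E -> R) b : (0 < E)%N ->
  (forall e, f e <= b) -> maxdom f <= b.
Proof.
move=> E0 H; apply: ge_sup; first by exists (f (Ordinal E0)), (Ordinal E0).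
by move=> _ [i _ <-].
Qed.

Lemma maxdom_attained {R : realType} E (f : 'I_E -> R) : (0 < E)%N ->
  exists e, maxdom f = f e.
Proof.
move=> E0.
have [e _ He] := @arg_maxP _ _ _ (Ordinal E0) xpredT f isT.
exists e; apply: sup_eq_mem; first by exists e.
by move=> _ [i _ <-]; apply: He.
Qed.

Lemma Lvar_sum {R : realType} p k E (V : 'M[R]_(p,k)) (lam : 'I_E -> R) (S : 'I_E -> 'M[R]_p) :
  Lvar V (\sum_(e < E) lam e *: S e) = \sum_(e < E) lam e * Lvar V (S e).
Proof.
rewrite /Lvar mulmx_sumr mulmx_suml raddf_sum; apply: eq_bigr => e _.
by rewrite -scalemxAr -scalemxAl; apply: mxtraceZ.
Qed.

Lemma tr_sum {R : realType} p E (lam : 'I_E -> R) (S : 'I_E -> 'M[R]_p) :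
  \tr (\sum_(e < E) lam e *: S e) = \sum_(e < E) lam e * \tr (S e).
Proof. by rewrite raddf_sum; apply: eq_bigr => e _; apply: mxtraceZ. Qed.

Lemma LRCS_sum {R : realType} p k E (V : 'M[R]_(p,k)) (lam : 'I_E -> R) (S : 'I_E -> 'M[R]_p) :
  LRCS V (\sum_(e < E) lam e *: S e) = \sum_(e < E) lam e * LRCS V (S e).
Proof.
rewrite /LRCS Lvar_sum tr_sum -sumrB; apply: eq_bigr => e _; by rewrite mulrBr.
Qed.

Lemma LvarE {R : realType} p k (V : 'M[R]_(p,k)) (S : 'M[R]_p) :
  Lvar V S = \sum_(a < k) \sum_(i < p) \sum_(j < p) V i a * S i j * V j a.
Proof.
rewrite /Lvar /mxtrace; apply: eq_bigr => a _.
rewrite mxE; under eq_bigr => j _ do rewrite mxE big_distrl /=.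
rewrite exchange_big /=; apply: eq_bigr => i _; apply: eq_bigr => j _.
by rewrite mxE.
Qed.

Lemma orth_entry {R : realType} p k (W : 'M[R]_(p,k)) : orthonormal_mx W ->
  forall i a, W i a ^+ 2 <= 1.
Proof.
move=> hW i a.
have : (W^T *m W) a a = 1 by rewrite hW mxE eqxx.
rewrite mxE => <-.
rewrite (bigD1 i) //= mxE -expr2 lerDl; apply: sumr_ge0 => j _.
by rewrite mxE -expr2 sqr_ge0.
Qed.

Definition Bnd {R : realType} {p} k (S : 'M[R]_p) : R :=
  \sum_(a < k) \sum_(i < p) \sum_(j < p) `|S i j|.

Lemma Lvar_bound {R : realType} p k (W : 'M[R]_(p,k)) (S : 'M[R]_p) :
  orthonormal_mx W -> Lvar W S <= Bnd k S.
Proof.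
move=> hW; rewrite LvarE /Bnd; apply: ler_sum => a _; apply: ler_sum => i _;
apply: ler_sum => j _.
have h1 := @orth_entry _ _ _ W hW i a; have h2 := @orth_entry _ _ _ W hW j a.
have h3 := ler_norm (S i j); have h4 : - S i j <= `|S i j| by rewrite -normrN ler_norm.
move: h1 h2 h3 h4; move: (W i a) (W j a) (S i j) `|S i j| => x y s n h1 h2 h3 h4.
have hc1 : x * y <= 1 by nra.
have hc2 : - 1 <= x * y by nra.
have -> : x * s * y = s * (x * y) by ring.
nra.
Qed.

Lemma orth_exists {R : realType} p k : (k <= p)%N ->
  exists W : 'M[R]_(p,k), orthonormal_mx W.
Proof.
move=> kp; exists (pid_mx k); rewrite /orthonormal_mx tr_pid_mx mul_pid_mx.
by rewrite minnn (minn_idPr kp) pid_mx_1.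
Qed.

Lemma LRCS_lb {R : realType} p k (S : 'M[R]_p) :
  lbound [set LRCS W S | W in [set W : 'M[R]_(p, k) | orthonormal_mx W]]
    (\tr S - Bnd k S).
Proof.
move=> _ [W hW <-]; rewrite /LRCS lerD2l lerN2; exact: Lvar_bound.
Qed.

Lemma LRCS_ne {R : realType} p k (S : 'M[R]_p) : (k <= p)%N ->
  [set LRCS W S | W in [set W : 'M[R]_(p, k) | orthonormal_mx W]] !=set0.
Proof.
by move=> kp; have [W hW] := @orth_exists R p k kp; exists (LRCS W S), W.
Qed.

Lemma Lk_conv {R : realType} kind p k E (V : 'M[R]_(p,k)) (lam : 'I_E -> R)
   (S : 'I_E -> 'M[R]_p) : (k <= p)%N -> (forall e, 0 <= lam e) ->
  Lk kind V (\sum_(e < E) lam e *: S e) <= \sum_(e < E) lam e * Lk kind V (S e).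
Proof.
move=> kp l0; case: kind => /=.
- by rewrite LRCS_sum.
- by rewrite Lvar_sum -sumrN; apply: ler_sum => e _; rewrite mulrN.
rewrite /Lreg LRCS_sum.
under [X in _ <= X]eq_bigr => e _ do rewrite mulrBr.
rewrite sumrB lerD2l lerN2.
apply: lb_le_inf; first exact: LRCS_ne.
move=> _ [W hW <-]; rewrite LRCS_sum; apply: ler_sum => e _.
apply: ler_wpM2l => //; apply: ge_inf; last by exists W.
by exists (\tr (S e) - Bnd k (S e)); apply: LRCS_lb.
Qed.

Lemma part_i {R : realType} (p k E : nat) : (k <= p)%N -> (0 < E)%N ->
   forall (dT : 'I_E -> measure_display) (T : forall e, measurableType (dT e))
          (Pe : forall e, probability (T e) R) (Xe : forall e, T e -> 'rV[R]_p),
   (forall e, centered_rv (Pe e) (Xe e)) ->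
   forall kind : loss_kind,
   let Sig := fun e => cov (Pe e) (Xe e) in
   forall V : 'M[R]_(p, k), 
      is_sup (loss_values kind Sig V) (maxdom (fun e => Lk kind V (Sig e))) /\
      supP kind Sig V = maxdom (fun e => Lk kind V (Sig e)).
Proof.
move=> kp E0 dT T Pe Xe hc kind Sig V.
set m := maxdom _.
have mem : loss_values kind Sig V m.
  have [e0 he0] := @maxdom_attained _ _ (fun e => Lk kind V (Sig e)) E0.
  exists (dT e0), (T e0), (Pe e0), (Xe e0); split; first exact: hc.
  have hS : cov (Pe e0) (Xe e0) = \sum_(e < E) (e == e0)%:R *: Sig e.
    rewrite (bigD1 e0) //= eqxx scale1r big1 ?addr0 //.
    by move=> e /negbTE ->; rewrite scale0r.
  split; last by rewrite /m he0.
  exists (fun e => (e == e0)%:R); split; first by move=> e; rewrite ler0n.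
  split => //; rewrite (bigD1 e0) //= eqxx big1 ?addr0 //.
  by move=> e /negbTE ->.
have ub : ubound (loss_values kind Sig V) m.
  move=> _ [d [T' [P [X [_ [[lam [l0 [l1 ->]]] ->]]]]]].
  apply: le_trans (@Lk_conv _ kind _ _ _ V lam Sig kp l0) _.
  apply: le_trans (_ : \sum_(e < E) lam e * m <= _).
    by apply: ler_sum => e _; apply: ler_wpM2l => //; apply: maxdom_ge.
  by rewrite -big_distrl /= l1 mul1r.
split; first by split => // b hb; exact: hb.
exact: sup_eq_mem.
Qed.

Lemma mfun_bool {R : realType} (g : bool -> R) : measurable_fun setT g.
Proof. by move=> _ Y _. Qed.

Lemma half01 {R : realType} : 0 <= (2^-1 : R) <= 1.
Proof. apply/andP; split; lra. Qed.

Lemma bern_int {R : realType} (g : bool -> R) :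
  (\int[bernoulli_prob (2^-1 : R)]_t (g t)%:E = ((g true + g false) / 2)%:E)%E.
Proof.
rewrite integralE.
rewrite integral_bernoulli_prob; [|exact: half01|by move=> x; exact: funepos_ge0].
rewrite integral_bernoulli_prob; [|exact: half01|by move=> x; exact: funeneg_ge0].
rewrite !funeposE !funenegE -!EFinN -!EFin_max /unstable.onem.

rewrite -!EFinM -!EFinD; congr (_%:E).
have h : forall x : R, Num.max x 0 - Num.max (- x) 0 = x.
  by move=> x; rewrite !maxElt; do 2 case: ifPn => ?; lra.
have := h (g true); have := h (g false); lra.
Qed.

Lemma bern_integrable {R : realType} (g : bool -> R) :
  (bernoulli_prob (2^-1 : R)).-integrable setT (fun t => (g t)%:E).
Proof.
apply/integrableP; split; first by move=> _ Y _.
under eq_integral do rewrite abse_EFin.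
by rewrite bern_int ltry.
Qed.

Definition sgn (t : bool) {R : realType} : R := if t then 1 else -1.

Definition Xex {R : realType} (e : 'I_2) (t : bool) : 'rV[R]_2 :=
  \row_j (sgn t * (j == e)%:R).

Definition Pex {R : realType} : probability bool R := bernoulli_prob (2^-1 : R).

Lemma Xex_centered {R : realType} e : centered_rv (@Pex R) (Xex e).
Proof.
split; first by move=> i _ Y _.
split; first by move=> i; exact: bern_integrable.
by move=> i; rewrite /Pex bern_int /Xex !mxE /sgn; congr (_%:E); ring.
Qed.

Lemma covex {R : realType} e :
  cov (@Pex R) (Xex e) = \matrix_(i, j) ((i == e)%:R * (j == e)%:R).
Proof.
apply/matrixP => i j; rewrite !mxE /Pex bern_int /= /Xex !mxE /sgn /=.
by field.
Qed.

Lemma sum_ind {R : realType} n (x : 'I_n -> R) e :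
  \sum_(i < n) x i * (i == e)%:R = x e.
Proof.
rewrite (bigD1 e) //= eqxx mulr1 big1 ?addr0 //.
by move=> i /negbTE ->; rewrite mulr0.
Qed.

Lemma Lvar_ex {R : realType} n (V : 'M[R]_(n,1)) e :
  Lvar V (\matrix_(i,j) ((i==e)%:R * (j==e)%:R)) = V e 0 ^+ 2.
Proof.
rewrite LvarE big_ord1.
transitivity (\sum_(i < n) (V i 0 * (i == e)%:R) * \sum_(j < n) (V j 0 * (j == e)%:R)).
  apply: eq_bigr => i _; rewrite mulr_sumr; apply: eq_bigr => j _; rewrite mxE; ring.
by rewrite (@sum_ind _ _ (fun i => V i 0)) -big_distrl /= (@sum_ind _ _ (fun i => V i 0)) expr2.
Qed.

Lemma orth2 {R : realType} (V : 'M[R]_(2,1)) : orthonormal_mx V ->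
  V 0 0 ^+ 2 + V 1 0 ^+ 2 = 1.
Proof.
move=> h; have : (V^T *m V) 0 0 = 1 by rewrite h mxE.
rewrite mxE !big_ord_recl big_ord0 !mxE addr0 -!expr2. move=> H; have -> : (1 : 'I_2) = lift ord0 ord0 by apply: val_inj. exact H.
Qed.

Lemma orth_col {R : realType} n (e : 'I_n) : orthonormal_mx (\col_i ((i == e)%:R) : 'M[R]_(n,1)).
Proof.
apply/matrixP => a b; rewrite !ord1 !mxE.
under eq_bigr do rewrite !mxE.
by rewrite sum_ind eqxx.
Qed.

Definition Smat {R : realType} (e : 'I_2) : 'M[R]_2 := \matrix_(i,j) ((i==e)%:R * (j==e)%:R).

Lemma tr_Smat {R : realType} e : \tr (@Smat R e) = 1.
Proof.
rewrite /mxtrace; under eq_bigr do rewrite mxE.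
by rewrite (@sum_ind _ _ (fun i => (i == e)%:R)) eqxx.
Qed.

Lemma LRCS_Smat {R : realType} (V : 'M[R]_(2,1)) e : LRCS V (Smat e) = 1 - V e 0 ^+ 2.
Proof. by rewrite /LRCS tr_Smat /Smat Lvar_ex. Qed.

Lemma inf_Smat {R : realType} e :
  inf [set LRCS W (@Smat R e) | W in [set W : 'M[R]_(2, 1) | orthonormal_mx W]] = 0.
Proof.
apply: inf_eq_mem.
  exists (\col_i ((i == e)%:R)); first exact: orth_col.
  by rewrite LRCS_Smat mxE eqxx expr1n subrr.
move=> _ [W hW <-]; rewrite LRCS_Smat subr_ge0.
exact: (@orth_entry _ _ _ W hW e 0).
Qed.

Lemma Lk_Smat {R : realType} kind (V : 'M[R]_(2,1)) e :
  Lk kind V (Smat e) = if kind is negVar_loss then - V e 0 ^+ 2 else 1 - V e 0 ^+ 2.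
Proof.
case: kind => /=; first exact: LRCS_Smat.
  by rewrite /Smat Lvar_ex.
by rewrite /Lreg inf_Smat subr0 LRCS_Smat.
Qed.

Lemma ord2_cases (e : 'I_2) : e = 0 \/ e = 1.
Proof. by case: e => [[|[|]]] //= ?; [left|right]; apply: val_inj. Qed.

Lemma sum2 {R : realType} (f : 'I_2 -> R) : \sum_(e < 2) f e = f 0 + f 1.
Proof.
rewrite !big_ord_recl big_ord0 addr0.
by have -> : (lift ord0 ord0 : 'I_2) = 1 by apply: val_inj.
Qed.

Lemma supP_ex {R : realType} kind (V : 'M[R]_(2,1)) :
  supP kind (fun e => cov Pex (Xex e)) V = maxdom (fun e => Lk kind V (Smat e)).
Proof.
have := (@part_i R 2 1 2 isT isT (fun _ => _) (fun _ => bool) (fun _ => Pex)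
  (fun e => Xex e) Xex_centered kind V).2.
move=> ->; congr maxdom; apply: funext => e; by rewrite covex.
Qed.

Definition Whalf {R : realType} : 'M[R]_(2,1) := \col_i (Num.sqrt (2^-1)).

Lemma sqrt_half {R : realType} : Num.sqrt (2^-1 : R) ^+ 2 = 2^-1.
Proof. by rewrite sqr_sqrtr //; lra. Qed.

Lemma Whalf_orth {R : realType} : orthonormal_mx (@Whalf R).
Proof.
apply/matrixP => a b; rewrite !ord1 !mxE sum2 !mxE -!expr2 sqrt_half.
rewrite eqxx /=; lra.
Qed.

Lemma not_argmin {R : realType} kind (V : 'M[R]_(2,1)) :
  (V 0 0 ^+ 2 = 0 \/ V 1 0 ^+ 2 = 0) ->
  ~ argmin_orth (supP kind (fun e => cov Pex (Xex e))) V.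
Proof.
move=> hax [_ hmin].
have := hmin _ Whalf_orth; rewrite !supP_ex.
set c : R := if kind is negVar_loss then 0 else 1.
have h1 : c <= maxdom (fun e => Lk kind V (Smat e)).
  case: hax => h.
    apply: le_trans (maxdom_ge _ _ 0); rewrite Lk_Smat h /c; clear hmin; case: kind {c} => /=; lra.
  apply: le_trans (maxdom_ge _ _ 1); rewrite Lk_Smat h /c; clear hmin; case: kind {c} => /=; lra.
have h2 : maxdom (fun e => Lk kind Whalf (Smat e)) <= c - 2^-1.
  apply: maxdom_le => // e; rewrite Lk_Smat mxE sqrt_half /c.
  clear hmin h1; case: kind {c} => /=; lra.
move=> h; have := le_trans h1 (le_trans h h2); lra.
Qed.

Lemma Lvar_Smat_col {R : realType} (e e' : 'I_2) :
  Lvar (\col_i ((i == e)%:R) : 'M[R]_(2,1)) (Smat e') = (e' == e)%:R.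
Proof. by rewrite /Smat Lvar_ex mxE; case: (e' == e); rewrite ?expr1n ?expr0n. Qed.

Lemma part_iv {R : realType} :
  (forall kind : loss_kind,
   exists (p k E : nat), (1 <= k <= p)%N /\ (0 < E)%N /\
   exists (w : 'I_E -> R), (forall e, 0 < w e) /\ \sum_(e < E) w e = 1 /\
   exists (dT : 'I_E -> measure_display) (T : forall e, measurableType (dT e))
          (Pe : forall e, probability (T e) R) (Xe : forall e, T e -> 'rV[R]_p),
   (forall e, centered_rv (Pe e) (Xe e)) /\
   (forall e, 0 < \tr (cov (Pe e) (Xe e))) /\
   let Sig := fun e => cov (Pe e) (Xe e) in
   (forall Vpool : 'M[R]_(p, k), is_poolPCA w Sig Vpool ->
      ~ argmin_orth (supP kind Sig) Vpool) /\
   (forall (Vs : 'I_E -> 'M[R]_(p, k)) (Vsep : 'M[R]_(p, k)),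
      is_sepPCA Sig Vs Vsep -> ~ argmin_orth (supP kind Sig) Vsep)).
Proof.
move=> kind; exists 2%N, 1%N, 2%N; split => //; split => //.
exists (fun e : 'I_2 => if e == 0 then 2/3 else 1/3).
split; first by move=> e; case: ifP => _; lra.
split; first by rewrite sum2 /=; lra.
exists (fun _ => _), (fun _ => bool), (fun _ => Pex), (fun e => Xex e).
split; first exact: Xex_centered.
split; first by move=> e; rewrite covex; have := @tr_Smat R e; rewrite /Smat => ->; lra.
move=> Sig.
have hS : forall e, Sig e = Smat e by move=> e; rewrite /Sig covex.
split.
  move=> V [hV hmax]; apply: not_argmin; right.
  have := hmax _ (@orth_col R 2 0); rewrite !Lvar_sum sum2 sum2 !hS !Lvar_Smat_col.
  rewrite /Smat !Lvar_ex /= => h.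
  have := @orth2 _ _ hV; have := sqr_ge0 (V 1 0); have := sqr_ge0 (V 0 0); lra.
move=> Vs Vsep [hVs [e0 [_ [_ ->]]]]; apply: not_argmin.
have [hV hmax] := hVs e0.
have := hmax _ (@orth_col R 2 e0); rewrite !hS Lvar_Smat_col eqxx /Smat Lvar_ex /= => h.
have o := @orth2 _ _ hV; have s1 := sqr_ge0 (Vs e0 1 0); have s0 := sqr_ge0 (Vs e0 0 0).
by case: (ord2_cases e0) h o s1 s0 => -> h o s1 s0; [right|left]; lra.
Qed.

Lemma part_123 {R : realType} :
  (forall (p k E : nat), (1 <= k <= p)%N -> (0 < E)%N ->
   forall (dT : 'I_E -> measure_display) (T : forall e, measurableType (dT e))
          (Pe : forall e, probability (T e) R) (Xe : forall e, T e -> 'rV[R]_p),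
   (forall e, centered_rv (Pe e) (Xe e)) ->
   (forall e, 0 < \tr (cov (Pe e) (Xe e))) ->
   forall kind : loss_kind,
   let Sig := fun e => cov (Pe e) (Xe e) in
   let maxL := fun V : 'M[R]_(p, k) => maxdom (fun e => Lk kind V (Sig e)) in
   (forall V : 'M[R]_(p, k), orthonormal_mx V ->
      is_sup (loss_values kind Sig V) (maxL V)) /\
   (forall V W : 'M[R]_(p, k), orthonormal_mx V -> orthonormal_mx W ->
      maxL V < maxL W -> supP kind Sig V < supP kind Sig W) /\
   (forall Vstar : 'M[R]_(p, k), argmin_orth maxL Vstar ->
      argmin_orth (supP kind Sig) Vstar)).
Proof.
move=> p k E /andP[_ kp] E0 dT T Pe Xe hc _ kind Sig maxL.
have H := fun V => @part_i R p k E kp E0 dT T Pe Xe hc kind V.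
split; first by move=> V _; case: (H V).
split; first by move=> V W _ _; rewrite (H V).2 (H W).2.
move=> Vs [hVs hmin]; split => // W hW.
by rewrite (H Vs).2 (H W).2; apply: hmin.
Qed.

Theorem mainTheorem2 (R : realType) :
  (* (i)-(iii) *)
  (forall (p k E : nat), (1 <= k <= p)%N -> (0 < E)%N ->
   forall (dT : 'I_E -> measure_display) (T : forall e, measurableType (dT e))
          (Pe : forall e, probability (T e) R) (Xe : forall e, T e -> 'rV[R]_p),
   (forall e, centered_rv (Pe e) (Xe e)) ->
   (forall e, 0 < \tr (cov (Pe e) (Xe e))) ->
   forall kind : loss_kind,
   let Sig := fun e => cov (Pe e) (Xe e) in
   let maxL := fun V : 'M[R]_(p, k) => maxdom (fun e => Lk kind V (Sig e)) in
   (forall V : 'M[R]_(p, k), orthonormal_mx V ->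
      is_sup (loss_values kind Sig V) (maxL V)) /\
   (forall V W : 'M[R]_(p, k), orthonormal_mx V -> orthonormal_mx W ->
      maxL V < maxL W -> supP kind Sig V < supP kind Sig W) /\
   (forall Vstar : 'M[R]_(p, k), argmin_orth maxL Vstar ->
      argmin_orth (supP kind Sig) Vstar))
  /\
  (* (iv) *)
  (forall kind : loss_kind,
   exists (p k E : nat), (1 <= k <= p)%N /\ (0 < E)%N /\
   exists (w : 'I_E -> R), (forall e, 0 < w e) /\ \sum_(e < E) w e = 1 /\
   exists (dT : 'I_E -> measure_display) (T : forall e, measurableType (dT e))
          (Pe : forall e, probability (T e) R) (Xe : forall e, T e -> 'rV[R]_p),
   (forall e, centered_rv (Pe e) (Xe e)) /\
   (forall e, 0 < \tr (cov (Pe e) (Xe e))) /\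
   let Sig := fun e => cov (Pe e) (Xe e) in
   (forall Vpool : 'M[R]_(p, k), is_poolPCA w Sig Vpool ->
      ~ argmin_orth (supP kind Sig) Vpool) /\
   (forall (Vs : 'I_E -> 'M[R]_(p, k)) (Vsep : 'M[R]_(p, k)),
      is_sepPCA Sig Vs Vsep -> ~ argmin_orth (supP kind Sig) Vsep)).
Proof. split; [exact: part_123 | exact: part_iv]. Qed.
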